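(* Let $G$ be a connected graph with $n$ vertices, $m$ edges, chromatic number $\chi$ and independence number $\theta$. If $0\leq \alpha < 1$, then $$S_{\chi}(A_{\alpha}(G))\geq \frac{2\alpha m}{\theta}.$$
   Context: All graphs are simple and undirected. $A_{\alpha}(G)=\alpha D(G)+(1-\alpha)A(G)$, where $A(G)$ is the adjacency matrix and $D(G)$ the diagonal degree matrix. For a real symmetric matrix $M$ with eigenvalues $\lambda_1(M)\geq\cdots\geq\lambda_n(M)$, $S_k(M)=\sum_{i=1}^k\lambda_i(M)$. The independence number is the maximum size of a set of pairwise non-adjacent vertices. *)

(* Defs.v *)
From HB Require Import structures.
From mathcomp Require Import all_boot all_order all_algebra.
From mathcomp Require Import polyrcf.
Set Implicit Arguments. Unset Strict Implicit. Unset Printing Implicit Defensive.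
Import Order.TTheory GRing.Theory Num.Theory.
Local Open Scope ring_scope.

(* For a real symmetric matrix the characteristic polynomial splits over R,
   so this list has exactly n entries. *)
Definition eigenvalues (R : rcfType) (n : nat) (M : 'M[R]_n) : seq R :=
  sort (fun x y : R => y <= x)
    (flatten [seq nseq (mup x (char_poly M)) x | x <- rootsR (char_poly M)]).

Definition S_k (R : rcfType) (n : nat) (k : nat) (M : 'M[R]_n) : R :=
  \sum_(i < k) (eigenvalues M)`_i.

Definition simple_graph (T : finType) (e : rel T) : Prop :=
  symmetric e /\ irreflexive e.

Definition connected_graph (T : finType) (e : rel T) : Prop :=
  forall x y : T, connect e x y.

(* number of edges: unordered adjacent pairs = ordered pairs / 2 *)
Definition num_edges (T : finType) (e : rel T) : nat :=
  (#|[set p : T * T | e p.1 p.2]|)./2.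

Definition degree (T : finType) (e : rel T) (x : T) : nat :=
  #|[set y | e x y]|.

Definition independent (T : finType) (e : rel T) (S : {set T}) : bool :=
  [forall x in S, forall y in S, ~~ e x y].

Definition independence_number (T : finType) (e : rel T) : nat :=
  \max_(S : {set T} | independent e S) #|S|.

Definition proper_colorable (T : finType) (e : rel T) (k : nat) : bool :=
  [exists c : {ffun T -> 'I_k}, [forall x, forall y, e x y ==> (c x != c y)]].

(* chromatic number: least k admitting a proper k-colouring
   (#|T| colours always suffice, so the minimum is over 0..#|T|) *)
Definition chromatic_number (T : finType) (e : rel T) : nat :=
  \big[minn/#|T|]_(k < #|T|.+1 | proper_colorable e k) k.

Definition adjacency_mx (R : nzRingType) (T : finType) (e : rel T)
  : 'M[R]_#|T| :=
  \matrix_(i, j) (e (enum_val i) (enum_val j))%:R.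

Definition degree_mx (R : nzRingType) (T : finType) (e : rel T)
  : 'M[R]_#|T| :=
  \matrix_(i, j) ((degree e (enum_val i))%:R *+ (i == j)).

Definition A_alpha (R : nzRingType) (T : finType) (e : rel T) (alpha : R)
  : 'M[R]_#|T| :=
  alpha *: degree_mx R e + (1 - alpha) *: adjacency_mx R e.

(* Main.v *)
Require Import Defs.
From HB Require Import structures.
From mathcomp Require Import all_boot all_order all_algebra.
From mathcomp Require Import polyrcf.
From mathcomp Require Import complex lra.
Import Order.TTheory GRing.Theory Num.Theory.
Local Open Scope ring_scope.

Lemma char_poly_simil (F : fieldType) n (P D : 'M[F]_n) :
  P \in unitmx -> char_poly (invmx P *m D *m P) = char_poly D.
Proof.
move=> Pu; rewrite /char_poly /char_poly_mx.
set f := map_mx (@polyC F).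
have eX : 'X%:M = f (invmx P) *m 'X%:M *m f P.
  rewrite mul_mx_scalar -scalemxAl.
  by rewrite -map_mxM mulVmx // /f map_mx1 scalemx1.
rewrite {1}eX /f !map_mxM -mulmxBl -mulmxBr !det_mulmx mulrC mulrA -det_mulmx.
by rewrite -map_mxM mulmxV // map_mx1 det1 mul1r.
Qed.

Lemma sym_real_roots (R : rcfType) n (A : 'M[R]_n) : A^T = A ->
  exists rs : seq R, size rs = n /\ char_poly A = \prod_(r <- rs) ('X - r%:P).
Proof.
move=> Asym.
pose f := real_complex R.
pose AC := map_mx f A.
have AH : AC \is hermsymmx.
  apply/(is_hermitianmxP false (@Num.conj_op _)); rewrite expr0 scale1r; apply/matrixP => i j.
  rewrite !mxE conj_Creal; last by rewrite complex_real.
  by rewrite -{1}Asym mxE.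
have /orthomx_spectralP AE := hermitian_normalmx AH.
have /mxOverP dreal := hermitian_spectral_diag_real AH.
set P := spectralmx AC in AE; set d := spectral_diag AC in AE dreal.
exists [seq @complex.Re R (d 0 i) | i <- enum 'I_n]; split; first by rewrite size_map size_enum_ord.
apply: (@map_poly_inj _ _ f).
rewrite map_char_poly -/AC AE char_poly_simil ?spectral_unit //.
rewrite char_poly_trig ?diag_mx_is_trig // rmorph_prod big_map big_enum /=.
apply: eq_bigr => i _; rewrite mxE eqxx mulr1n rmorphB /= map_polyX map_polyC /=.
by rewrite RRe_real // dreal.
Qed.

Lemma roots_perm (R : rcfType) (rs : seq R) (p := \prod_(r <- rs) ('X - r%:P)) :
  perm_eq (flatten [seq nseq (mup x p) x | x <- rootsR p]) rs.
Proof.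
have pn0 : p != 0 by rewrite monic_neq0 // monic_prod_XsubC.
apply/allP => x _ /=; apply/eqP.
rewrite count_flatten -map_comp sumnE big_map /=.
rewrite (eq_bigr (fun y => if y == x then mup y p else 0)%N); last first.
  by move=> y _; rewrite /= count_nseq /=; case: eqP => [->|]; rewrite ?eqxx ?mul1n // => /eqP; rewrite eq_sym => /negbTE ->.
rewrite -big_mkcond /=.
rewrite -mu_prod_XsubC -/p.
rewrite (eq_bigl (fun y => y == x)) //.
rewrite (eq_bigr (fun _ => mup x p)); last by move=> y /eqP ->.
rewrite big_const_seq iter_addn_0 count_uniq_mem; last by rewrite /rootsR uniq_roots.
case: (boolP (x \in rootsR p)) => xin; first by rewrite muln1.
rewrite muln0; apply/esym/mupNroot.
apply: contraNN xin => rx.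
by rewrite -(roots_on_rootsR pn0) rx andbT in_itv.
Qed.

Lemma top_avg (R : realDomainType) (s : seq R) k :
  sorted (fun x y => y <= x) s -> (k <= size s)%N ->
  k%:R * \sum_(i < size s) s`_i <= (size s)%:R * \sum_(i < k) s`_i.
Proof.
move=> so hk; set N := size s.
have key i j : (i < k)%N -> (k <= j < N)%N -> s`_j <= s`_i.
  move=> hi /andP[hkj hj].
  apply: (@sorted_leq_nth _ (fun x y => y <= x)) => //.
  - by move=> a b c hab hbc; apply: le_trans hbc hab.
  - by rewrite inE (leq_trans hi (leq_trans hkj (ltnW hj))).
  - by rewrite ltnW // (leq_trans hi hkj).
have H : \sum_(0 <= i < k) \sum_(k <= j < N) s`_j <=
         \sum_(0 <= i < k) \sum_(k <= j < N) s`_i.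
  apply: ler_sum_nat => i /andP[_ hi]; apply: ler_sum_nat => j hj.
  exact: key.
move: H; rewrite sumr_const_nat subn0.
under [X in _ <= X -> _]eq_bigr => i _ do rewrite sumr_const_nat.
rewrite sumrMnl.
have -> : \sum_(i < N) s`_i = \sum_(0 <= i < N) s`_i by rewrite big_mkord.
have -> : \sum_(i < k) s`_i = \sum_(0 <= i < k) s`_i by rewrite big_mkord.
rewrite (big_cat_nat (leq0n k) hk) /=.
set top := \sum_(0 <= i < k) s`_i; set bot := \sum_(k <= i < N) s`_i.
rewrite -[bot *+ k]mulr_natl -[top *+ _]mulr_natl => H.
have -> : N%:R = k%:R + (N - k)%:R :> R by rewrite -natrD subnKC.
rewrite mulrDr mulrDl lerD2l; exact: H.
Qed.

Lemma chi_props (T : finType) (e : rel T) : irreflexive e ->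
  proper_colorable e (chromatic_number e) /\ (chromatic_number e <= #|T|)%N.
Proof.
move=> irr.
have colT : proper_colorable e #|T|.
  apply/existsP; exists [ffun x => enum_rank x].
  apply/forallP => x; apply/forallP => y; apply/implyP => exy; rewrite !ffunE.
  rewrite (inj_eq enum_rank_inj); apply/eqP => xy.
  by rewrite xy irr in exy.
split.
- rewrite /chromatic_number; apply: (big_ind (fun k => proper_colorable e k)) => //.
  by move=> a b ha hb; rewrite /minn; case: ifP.
- rewrite /chromatic_number; apply: (big_ind (fun k => k <= #|T|)%N) => //.
  + by move=> a b ha hb; rewrite geq_min ha.
  + by move=> i _; rewrite -ltnS.
Qed.

Lemma theta_pos (T : finType) (e : rel T) : irreflexive e -> (0 < #|T|)%N ->
  (0 < independence_number e)%N.
Proof.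
move=> irr /card_gt0P [x0 _].
have ind : independent e [set x0].
  apply/forallP => x; apply/implyP; rewrite inE => /eqP ->.
  apply/forallP => y; apply/implyP; rewrite inE => /eqP ->.
  by rewrite irr.
apply: leq_trans (leq_bigmax_cond (F := fun S : {set T} => #|S|) _ ind).
by rewrite cards1.
Qed.

Lemma n_le_chi_theta (T : finType) (e : rel T) : irreflexive e ->
  (#|T| <= chromatic_number e * independence_number e)%N.
Proof.
move=> irr; have [col _] := @chi_props _ _ irr.
move: col; set chi := chromatic_number e => /existsP [c /forallP hc].
have -> : #|T| = (\sum_(k < chi) #|[set x | c x == k]|)%N.
  rewrite -sum1_card (partition_big c xpredT) //.
  apply: eq_bigr => k _; rewrite -sum1_card.
  by apply: eq_bigl => x; rewrite inE.
rewrite -[X in (_ <= X * _)%N]card_ord -sum_nat_const.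
apply: leq_sum => k _.
apply: (leq_bigmax_cond (F := fun S : {set T} => #|S|)).
apply/forallP => x; apply/implyP; rewrite inE => hx.
apply/forallP => y; apply/implyP; rewrite inE => hy.
apply/negP => exy; have := implyP (forallP (hc x) y) exy.
by rewrite (eqP hx) (eqP hy) eqxx.
Qed.

Lemma trace_A_alpha (R : rcfType) (T : finType) (e : rel T) (alpha : R) :
  irreflexive e ->
  \tr (A_alpha e alpha) = alpha * (#|[set p : T * T | e p.1 p.2]|)%:R.
Proof.
move=> irr; rewrite /mxtrace.
under eq_bigr => i _ do rewrite !mxE eqxx mulr1n irr mulr0 addr0.
rewrite -mulr_sumr -natr_sum; congr (_ * _%:R).
rewrite (reindex (@enum_rank T)) /=; last first.
  by exists enum_val => x _; rewrite ?enum_rankK ?enum_valK.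
under eq_bigr => x _ do rewrite enum_rankK.
rewrite -sum1_card big_mkcond /=.
under eq_bigr => x _ do rewrite /degree -sum1_card big_mkcond.
rewrite pair_big /=.
rewrite [RHS]big_mkcond; apply: eq_bigr => -[x y] _; by rewrite !inE.
Qed.

Lemma A_alpha_sym (R : rcfType) (T : finType) (e : rel T) (alpha : R) :
  symmetric e -> (A_alpha e alpha)^T = A_alpha e alpha.
Proof.
move=> sym; apply/matrixP => i j; rewrite !mxE sym.
by case: (eqVneq i j) => [->|ne]; rewrite ?eqxx // eq_sym (negbTE ne).
Qed.

Lemma eig_facts (R : rcfType) n (A : 'M[R]_n) : A^T = A ->
  size (eigenvalues A) = n /\
  ((0 < n)%N -> \sum_(i < n) (eigenvalues A)`_i = \tr A).
Proof.
move=> Asym; have [rs [hs hp]] := @sym_real_roots _ _ _ Asym.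
have pe : perm_eq (eigenvalues A) rs.
  rewrite /eigenvalues hp; have := @roots_perm _ rs; move=> /= h; by rewrite perm_sort.
have sz : size (eigenvalues A) = n by rewrite (perm_size pe).
split => // n0.
have -> : \sum_(i < n) (eigenvalues A)`_i = \sum_(x <- eigenvalues A) x.
  by rewrite [RHS](big_nth 0) sz big_mkord.
rewrite (perm_big _ pe) /=.
rewrite -[RHS]opprK -char_poly_trace // hp -hs coefPn_prod_XsubC ?opprK //.
by rewrite hs -lt0n.
Qed.

Lemma fin_ineq (R : realFieldType) (c t N S th : R) : c * t <= N * S ->
  N <= c * th -> 0 <= t -> 0 < N -> 0 < th -> t <= S * th.
Proof. move=> *. nra. Qed.

Theorem corollary5p3 (R : rcfType) (T : finType) (e : rel T) (alpha : R) :
  simple_graph e -> (0 < #|T|)%N -> connected_graph e ->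
  0 <= alpha -> alpha < 1 ->
  S_k (chromatic_number e) (A_alpha e alpha) >=
    2 * alpha * (num_edges e)%:R / (independence_number e)%:R.
Proof.
move=> [sym irr] hT _ ha0 _.
have [hs htr] := @eig_facts _ _ _ (@A_alpha_sym _ _ _ alpha sym).
have so : sorted (fun x y : R => y <= x) (eigenvalues (A_alpha e alpha)).
  by apply: sort_sorted => x y; apply: le_total.
have [_ hchi] := @chi_props _ _ irr.
have key := @top_avg _ _ _ so.
rewrite hs in key; have {key} key := key _ hchi.
rewrite htr // (@trace_A_alpha _ _ _ _ irr) in key.
set K := #|[set p : T * T | e p.1 p.2]| in key.
have th0 := @theta_pos _ _ irr hT.
have hn := @n_le_chi_theta _ _ irr.
rewrite /S_k ler_pdivrMr ?ltr0n //.
apply: (@le_trans _ _ (alpha * K%:R)).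
  rewrite /num_edges -/K mulrC mulrA.
  have hK : (K./2)%:R * 2 <= K%:R :> R.
    by rewrite -natrM ler_nat muln2 -{2}(odd_double_half K) leq_addl.
  rewrite [alpha * _]mulrC; apply: (ler_wpM2r ha0); exact: hK.
apply: (@fin_ineq _ _ _ _ _ _ key).
- by rewrite -natrM ler_nat.
- by rewrite mulr_ge0.
- by rewrite ltr0n.
- by rewrite ltr0n.
Qed.
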